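(* Let $\Lambda=(\lambda_1,\dots,\lambda_m)\in\mathbb{R}^m$, whose pairwise distinct values are $\eta_1,\dots,\eta_r$ (with multiplicities), and let $B_\Lambda$ be the exponential B-spline $$B_\Lambda=e^{\lambda_1(\cdot)}\chi_{[0,1)}*e^{\lambda_2(\cdot)}\chi_{[0,1)}*\dots*e^{\lambda_m(\cdot)}\chi_{[0,1)}.$$ For $1\le n\le r$ let $D_n$ be the differential operator $D_nf(x)=e^{\eta_n x}\frac{d}{dx}\bigl(e^{-\eta_n x}f(x)\bigr)$. Then there exists $x_0\in\mathbb{R}$ such that $\mathrm ZB_\Lambda(\cdot,\tfrac12)$ is monotone on $[x_0+k,x_0+k+1)$ for all $k\in\mathbb{Z}$, and for each $1\le n\le r$ there exists $y_0\in\mathbb{R}$ such that $D_n\mathrm ZB_\Lambda(\cdot,\tfrac12)$ is monotone on $[y_0+k,y_0+k+1)$ for all $k\in\mathbb{Z}$.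
   Context: The Zak transform is $\mathrm Zf(x,\omega)=\sum_{k\in\mathbb{Z}} f(x+k)e^{-2\pi i k\omega}$; in particular $\mathrm ZB_\Lambda(x,\tfrac12)=\sum_{k\in\mathbb{Z}}(-1)^kB_\Lambda(x+k)$. Here $\chi_{[0,1)}$ is the indicator function of $[0,1)$ and $*$ denotes convolution on $\mathbb{R}$. *)

(* Defs.v *)
From Stdlib Require Import Reals List ZArith.
From Coquelicot Require Import Coquelicot.
Open Scope R_scope.

Definition chi01 (x : R) : R :=
  if Rle_dec 0 x then (if Rlt_dec x 1 then 1 else 0) else 0.

Definition expchi (lam : R) (x : R) : R := exp (lam * x) * chi01 x.

(* Exponential B-spline B_Lambda for Lambda = lam_1 :: ... :: lam_m (m >= 1):
   B_[lam] = expchi lam,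
   B_(lam :: L) = expchi lam * B_L  (convolution on R; since expchi lam
   vanishes outside [0,1), the integral over R reduces to [0,1]). *)
Fixpoint EB (L : list R) : R -> R :=
  match L with
  | nil => fun _ => 0
  | lam :: L' =>
      match L' with
      | nil => expchi lam
      | _ :: _ => fun x => RInt (fun t => expchi lam t * EB L' (x - t)) 0 1
      end
  end.

(* Zak transform at omega = 1/2:  sum_{k in Z} (-1)^k f(x+k),
   split as k >= 0 and k = -(j+1), j >= 0. *)
Definition ZakHalf (f : R -> R) (x : R) : R :=
  Series (fun k : nat => (-1) ^ k * f (x + INR k))
  + Series (fun j : nat => (-1) ^ (j + 1) * f (x - INR (j + 1))).

Definition Dop (eta : R) (f : R -> R) (x : R) : R :=
  exp (eta * x) * Derive (fun y => exp (- eta * y) * f y) x.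

Definition monotone_on (f : R -> R) (a b : R) : Prop :=
  (forall x y, a <= x -> x <= y -> y < b -> f x <= f y) \/
  (forall x y, a <= x -> x <= y -> y < b -> f y <= f x).

(* Main.v *)
Require Import Defs.
From Stdlib Require Import Reals List ZArith Lra Lia.
From Coquelicot Require Import Coquelicot.
Open Scope R_scope.

Definition bstep (mu : R) (d : Z -> R -> R) (j : Z) (y : R) : R :=
  exp (mu*y) * (RInt (fun s => exp (-mu*s) * d j s) (IZR j) y
               + RInt (fun s => exp (-mu*s) * d (j-1)%Z s) (y-1) (IZR j)).

Fixpoint dstep (mu : R) (d : nat -> Z -> R -> R) (n : nat) : Z -> R -> R :=
  match n with
  | O => bstep mu (d O)
  | S n' => fun j y => mu * dstep mu d n' j y + d n' j y - exp mu * d n' (j-1)%Z (y-1)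
  end.

Fixpoint db (L : list R) : nat -> Z -> R -> R :=
  match L with
  | nil => fun _ _ _ => 0
  | lam :: L' =>
      match L' with
      | nil => fun n j y => if Z.eq_dec j 0 then lam ^ n * exp (lam*y) else 0
      | _ :: _ => dstep lam (db L')
      end
  end.

Ltac Rring := cbn; match goal with |- ?a = ?b => change (@eq R a b) end; ring.

Lemma RInt_deriv (h : R -> R) (a y : R) :
  (forall z, continuous h z) -> is_derive (fun t => RInt h a t) y (h y).
Proof.
  intros Hc. apply is_derive_RInt with (a := a).
  - exists (mkposreal 1 Rlt_0_1). intros t _. apply RInt_correct.
    apply ex_RInt_continuous. intros; apply Hc.
  - apply Hc.
Qed.

Lemma is_derive_eq (f : R -> R) x l l' : is_derive f x l -> l = l' -> is_derive f x l'.
Proof. intros H ->; exact H. Qed.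

Lemma db_deriv : forall L n j y, is_derive (db L n j) y (db L (S n) j y).
Proof.
  induction L as [|lam L IH].
  - intros. simpl. apply (is_derive_const 0).
  - destruct L as [|a L].
    + intros n j y. simpl. destruct (Z.eq_dec j 0).
      * auto_derive; auto. ring.
      * apply (is_derive_const 0).
    + intros n. change (db (lam :: a :: L)) with (dstep lam (db (a::L))).
      set (d := db (a::L)) in *.
      assert (Hc : forall n j z, continuous (d n j) z).
      { intros n0 j0 z. apply (ex_derive_continuous (d n0 j0)). eexists; apply IH. }
      induction n as [|n IHn]; intros j y.
      * simpl. unfold bstep.
        set (h1 := fun s => exp (- lam * s) * d O j s).
        set (h2 := fun s => exp (- lam * s) * d O (j-1)%Z s).
        assert (Hh1 : forall z, continuous h1 z).
        { intros z. apply (continuous_mult (fun s => exp (-lam*s)) (d O j)).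
          apply (ex_derive_continuous (fun s => exp (-lam*s))); auto_derive; auto. apply Hc. }
        assert (Hh2 : forall z, continuous h2 z).
        { intros z. apply (continuous_mult (fun s => exp (-lam*s)) (d O (j-1)%Z)).
          apply (ex_derive_continuous (fun s => exp (-lam*s))); auto_derive; auto. apply Hc. }
        assert (E2 : forall y, RInt h2 (y-1) (IZR j) = - RInt h2 (IZR j) (y-1)).
        { intros. rewrite <- opp_RInt_swap. reflexivity. apply ex_RInt_continuous; intros; apply Hh2. }
        assert (HD : is_derive (fun y => exp (lam*y) * (RInt h1 (IZR j) y - RInt h2 (IZR j) (y-1))) y
          (lam * exp (lam*y) * (RInt h1 (IZR j) y - RInt h2 (IZR j) (y-1)) + exp (lam*y) * (h1 y - h2 (y-1)))).
        { eapply is_derive_eq.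
          apply (is_derive_mult (fun y => exp (lam*y)) (fun y => RInt h1 (IZR j) y - RInt h2 (IZR j) (y-1))
             y (lam * exp (lam*y)) (h1 y - h2 (y-1))).
          - auto_derive; auto. ring.
          - eapply is_derive_eq.
            apply (is_derive_minus (fun y => RInt h1 (IZR j) y) (fun y => RInt h2 (IZR j) (y-1))).
            + apply RInt_deriv; auto.
            + apply (is_derive_comp (fun t => RInt h2 (IZR j) t) (fun y => y - 1) y (h2 (y-1)) 1).
              * apply RInt_deriv; auto.
              * auto_derive; auto.
            + simpl. unfold minus, plus, opp, scal; simpl. unfold mult; simpl. ring.
          - intros; apply Rmult_comm.
          - simpl. unfold plus, mult; simpl. ring. }
        eapply is_derive_eq.
        { eapply is_derive_ext; [|apply HD]. intros t. simpl. rewrite E2. ring. }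
        rewrite E2. unfold h1, h2.
        assert (X1 : exp (lam*y) * exp (-lam*y) = 1).
        { rewrite <- exp_plus. replace (lam*y + -lam*y) with 0 by ring. apply exp_0. }
        assert (X2 : exp (lam*y) * exp (-lam*(y-1)) = exp lam).
        { rewrite <- exp_plus. f_equal. ring. }
        simpl. transitivity (lam * (exp (lam * y) * (RInt h1 (IZR j) y + - RInt h2 (IZR j) (y - 1))) +
           (exp (lam*y) * exp (-lam*y)) * d O j y - (exp (lam*y) * exp (-lam*(y-1))) * d O (j-1)%Z (y-1)).
        match goal with |- ?a = ?b => change (@eq R a b) end. unfold h1, h2. ring. rewrite X1, X2. match goal with |- ?a = ?b => change (@eq R a b) end. unfold h1, h2. ring.
      * cbn [dstep]. eapply is_derive_eq.
        apply (is_derive_minus (fun y => lam * dstep lam d n j y + d n j y)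
                 (fun y => exp lam * d n (j-1)%Z (y-1))).
        apply (is_derive_plus (fun y => lam * dstep lam d n j y) (fun y => d n j y)).
        apply is_derive_scal, IHn. apply IH.
        apply is_derive_scal.
        apply (is_derive_comp (d n (j-1)%Z) (fun y => y-1) y (d (S n) (j-1)%Z (y-1)) 1). apply IH. auto_derive; auto.
        simpl. unfold minus, plus, opp, scal, mult; simpl.
        cbn. match goal with |- ?a = ?b => change (@eq R a b) end. ring.
Qed.

Lemma RInt_zero (f : R -> R) a b : (forall x, f x = 0) -> RInt f a b = 0.
Proof.
  intros H. rewrite (RInt_ext f (fun _ => 0)). rewrite RInt_const. apply Rmult_0_r.
  intros; apply H.
Qed.

Lemma db_supp : forall L n j y, (j < 0 \/ Z.of_nat (length L) <= j)%Z -> db L n j y = 0.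
Proof.
  induction L as [|lam L IH]; intros n j y Hj.
  - reflexivity.
  - destruct L as [|a L].
    + simpl. destruct (Z.eq_dec j 0); [subst; simpl in Hj; lia | reflexivity].
    + change (db (lam :: a :: L)) with (dstep lam (db (a::L))).
      revert j y Hj. induction n as [|n IHn]; intros j y Hj.
      * simpl. unfold bstep.
        rewrite (RInt_zero _ (IZR j) y), (RInt_zero _ (y-1) (IZR j)). ring.
        intros; rewrite IH. ring. simpl in Hj |- *; lia.
        intros; rewrite IH. ring. simpl in Hj |- *; lia.
      * cbn [dstep]. rewrite IHn, !IH; auto; simpl in Hj |- *; try lia. ring.
Qed.

Lemma db_knot : forall L n j, (n + 2 <= length L)%nat ->
  db L n j (IZR j) = db L n (j-1)%Z (IZR j).
Proof.
  induction L as [|lam L IH]; intros n j Hn.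
  - reflexivity.
  - destruct L as [|a L].
    + simpl in Hn; lia.
    + change (db (lam :: a :: L)) with (dstep lam (db (a::L))).
      revert j. induction n as [|n IHn]; intros j.
      * simpl. unfold bstep. rewrite !RInt_point. rewrite minus_IZR.
        replace (IZR j - 1) with (IZR j - 1) by ring. rewrite RInt_point.
        replace (j - 1 - 1)%Z with (j-1-1)%Z by ring.
        unfold zero; simpl. ring.
      * cbn [dstep]. rewrite IHn by lia. rewrite (IH n j) by (simpl in Hn |- *; lia).
        replace (IZR j - 1) with (IZR (j-1)) by (rewrite minus_IZR; ring).
        rewrite (IH n (j-1)%Z) by (simpl in Hn |- *; lia). reflexivity.
Qed.

Definition dp (L : list R) (n : nat) (x : R) : R :=
  sum_f_R0 (fun i => (-1)^i * db L n (Z.of_nat i) (x + INR i)) (length L).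

Lemma sum_deriv (f : nat -> R -> R) (f' : nat -> R -> R) N x :
  (forall i, is_derive (f i) x (f' i x)) ->
  is_derive (fun y => sum_f_R0 (fun i => f i y) N) x (sum_f_R0 (fun i => f' i x) N).
Proof.
  intros H. induction N as [|N IHN].
  - simpl. apply H.
  - simpl. apply (is_derive_plus (fun y => sum_f_R0 (fun i => f i y) N) (fun y => f (S N) y)); auto.
Qed.

Lemma dp_deriv L n x : is_derive (dp L n) x (dp L (S n) x).
Proof.
  unfold dp. apply (sum_deriv (fun i y => (-1)^i * db L n (Z.of_nat i) (y + INR i))
                             (fun i y => (-1)^i * db L (S n) (Z.of_nat i) (y + INR i))).
  intros i. apply is_derive_scal.
  eapply is_derive_eq.
  apply (is_derive_comp (db L n (Z.of_nat i)) (fun y => y + INR i) x (db L (S n) (Z.of_nat i) (x + INR i)) 1).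
  apply db_deriv. auto_derive; auto. Rring.
Qed.

Lemma sum_scal_l c (f : nat -> R) N : sum_f_R0 (fun i => c * f i) N = c * sum_f_R0 f N.
Proof. induction N; simpl; [ring|rewrite IHN; ring]. Qed.

Lemma dp_rec mu L n x : L <> nil ->
  dp (mu :: L) (S n) x = mu * dp (mu :: L) n x + (1 + exp mu) * dp L n x.
Proof.
  intros HL. destruct L as [|a L']; [congruence|].
  set (L := a :: L').
  unfold dp at 1.
  change (db (mu :: L) (S n)) with (fun j y => mu * db (mu::L) n j y + db L n j y - exp mu * db L n (j-1)%Z (y-1)).
  cbv beta.
  set (m := length L). change (length (mu :: L)) with (S m).
  rewrite (sum_eq _ (fun i => (mu * ((-1)^i * db (mu::L) n (Z.of_nat i) (x + INR i))
      + (-1)^i * db L n (Z.of_nat i) (x + INR i))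
      - exp mu * ((-1)^i * db L n (Z.of_nat i - 1)%Z (x + INR i - 1)))) by (intros; ring).
  rewrite minus_sum, plus_sum, !sum_scal_l.
  assert (HB : sum_f_R0 (fun i => (-1)^i * db L n (Z.of_nat i) (x + INR i)) (S m) = dp L n x).
  { rewrite tech5. rewrite (db_supp L n (Z.of_nat (S m))). unfold dp; fold m; ring. right. unfold m; lia. }
  assert (HC : sum_f_R0 (fun i => (-1)^i * db L n (Z.of_nat i - 1)%Z (x + INR i - 1)) (S m) = - dp L n x).
  { rewrite decomp_sum by lia. simpl pred.
    rewrite (db_supp L n (Z.of_nat 0 - 1)) by (left; lia).
    rewrite (sum_eq _ (fun i => -1 * ((-1)^i * db L n (Z.of_nat i) (x + INR i)))).
    rewrite sum_scal_l. unfold dp; fold m. ring.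
    intros i _. replace (Z.of_nat (S i) - 1)%Z with (Z.of_nat i) by lia.
    rewrite S_INR. replace (x + (INR i + 1) - 1) with (x + INR i) by ring. simpl. ring. }
  rewrite HB, HC. unfold dp. change (length (mu :: L)) with (S m). ring.
Qed.

Lemma dp_base lam n x : dp (lam :: nil) n x = lam ^ n * exp (lam * x).
Proof.
  unfold dp. simpl. replace (x + 0) with x by ring. ring.
Qed.

Lemma dp_bdry L n : (n + 2 <= length L)%nat -> dp L n 1 = - dp L n 0.
Proof.
  intros Hn. unfold dp. remember (length L) as m eqn:Em.
  destruct m as [|m]; [lia|].
  rewrite tech5. rewrite (db_supp L n (Z.of_nat (S m))) by (right; rewrite <- Em; lia).
  rewrite (decomp_sum (fun i => (-1)^i * db L n (Z.of_nat i) (0 + INR i))) by lia. simpl pred.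
  assert (H0 : db L n (Z.of_nat 0) (0 + INR 0) = 0).
  { simpl. replace (0+0) with (IZR 0) by (simpl; ring).
    rewrite db_knot by lia. apply db_supp. left; lia. }
  rewrite H0.
  rewrite (sum_eq (fun i => (-1)^i * db L n (Z.of_nat i) (1 + INR i))
                  (fun i => -1 * ((-1)^(S i) * db L n (Z.of_nat (S i)) (0 + INR (S i))))).
  rewrite sum_scal_l. ring.
  intros i _. rewrite (INR_IZR_INZ (S i)).
  replace (0 + IZR (Z.of_nat (S i))) with (IZR (Z.of_nat (S i))) by ring.
  rewrite db_knot by lia. replace (Z.of_nat (S i) - 1)%Z with (Z.of_nat i) by lia.
  rewrite Nat2Z.inj_succ, succ_IZR, <- INR_IZR_INZ. simpl.
  replace (INR i + 1) with (1 + INR i) by ring. ring.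
Qed.

Definition Sg (f : R -> R) (c : R) :=
  (forall x, 0 <= x < c -> f x <= 0) /\ (forall x, c <= x < 1 -> 0 <= f x).
Definition Psg (f : R -> R) :=
  exists c, 0 <= c <= 1 /\ (Sg f c \/ Sg (fun x => - f x) c).
Definition CS (f : R -> R) := Sg f 0 \/ Sg (fun x => - f x) 0.

Lemma mono_up (g g' : R -> R) a b :
  (forall x, is_derive g x (g' x)) -> (forall x, a <= x < b -> 0 <= g' x) ->
  forall x y, a <= x -> x <= y -> y <= b -> g x <= g y.
Proof.
  intros Hd Hs x y Hax Hxy Hyb.
  destruct (Req_dec x y) as [->|Hne]; [lra|].
  destruct (MVT_cor2 g g' x y) as [z [Hz1 Hz2]]; [lra| |].
  intros; apply is_derive_Reals; auto.
  assert (0 <= g' z) by (apply Hs; lra).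
  assert (0 <= g' z * (y - x)) by (apply Rmult_le_pos; lra). lra.
Qed.

Lemma mono_down (g g' : R -> R) a b :
  (forall x, is_derive g x (g' x)) -> (forall x, a <= x < b -> g' x <= 0) ->
  forall x y, a <= x -> x <= y -> y <= b -> g y <= g x.
Proof.
  intros Hd Hs x y Hax Hxy Hyb.
  assert (- g x <= - g y); [|lra].
  apply (mono_up (fun x => - g x) (fun x => - g' x) a b); auto.
  intros z. apply (is_derive_opp g z (g' z)). auto.
  intros z Hz; specialize (Hs z Hz); lra.
Qed.

Lemma crossing (g g' : R -> R) a b : (forall x, is_derive g x (g' x)) -> a <= b ->
  (forall x y, a <= x -> x <= y -> y <= b -> g x <= g y) ->
  exists d, a <= d <= b /\ (forall x, a <= x < d -> g x <= 0) /\ (forall x, d <= x < b -> 0 <= g x).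
Proof.
  intros Hd Hab Hm.
  destruct (Rle_lt_dec 0 (g a)) as [H0|H0].
  { exists a. split; [lra|split]; [intros; lra|]. intros x Hx. specialize (Hm a x). lra. }
  destruct (Rle_lt_dec (g b) 0) as [H1|H1].
  { exists b. split; [lra|split]; [|intros; lra]. intros x Hx. specialize (Hm x b). lra. }
  assert (Hab' : a < b) by (destruct (Req_dec a b); [subst; lra|lra]).
  assert (Hc : continuity g).
  { intros z. apply derivable_continuous_pt. exists (g' z). apply is_derive_Reals, Hd. }
  destruct (IVT g a b Hc Hab' H0 H1) as [d [Hd1 Hd2]].
  exists d. split; [lra|split].
  - intros x Hx. rewrite <- Hd2. apply Hm; lra.
  - intros x Hx. rewrite <- Hd2. apply Hm; lra.
Qed.

Lemma exp_pos' x : 0 < exp x. Proof. apply exp_pos. Qed.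

Lemma Rolle_core (q r : R -> R) mu c :
  (forall x, is_derive q x (mu * q x + r x)) -> 0 <= c <= 1 -> Sg r c ->
  (q 1 = - q 0 \/ c = 0) -> Psg q.
Proof.
  intros Hd Hc [Hr1 Hr2] Hb.
  set (g := fun x => exp (- mu * x) * q x).
  set (g' := fun x => exp (- mu * x) * r x).
  assert (Hg : forall x, is_derive g x (g' x)).
  { intros x. unfold g, g'. eapply is_derive_eq.
    apply (is_derive_mult (fun x => exp (-mu * x)) q x (- mu * exp (-mu*x)) (mu * q x + r x)).
    auto_derive; auto; ring. apply Hd. intros; apply Rmult_comm. Rring. }
  assert (Hsg : forall x, (q x <= 0 <-> g x <= 0) /\ (0 <= q x <-> 0 <= g x)).
  { intros x. unfold g. pose proof (exp_pos (-mu*x)). split; split; intros.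
    - assert (0 <= exp (-mu*x) * (- q x)) by (apply Rmult_le_pos; lra). lra.
    - destruct (Rle_lt_dec (q x) 0); auto. assert (0 < exp (-mu*x) * q x) by (apply Rmult_lt_0_compat; lra). lra.
    - apply Rmult_le_pos; lra.
    - destruct (Rle_lt_dec 0 (q x)); auto. assert (0 < exp (-mu*x) * (- q x)) by (apply Rmult_lt_0_compat; lra). lra. }
  assert (Hup : forall x y, c <= x -> x <= y -> y <= 1 -> g x <= g y).
  { apply (mono_up g g' c 1 Hg). intros x Hx. unfold g'. apply Rmult_le_pos. pose proof (exp_pos (-mu*x)); lra. apply Hr2; lra. }
  assert (Hdn : forall x y, 0 <= x -> x <= y -> y <= c -> g y <= g x).
  { apply (mono_down g g' 0 c Hg). intros x Hx. unfold g'.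
    assert (0 <= exp (-mu*x) * (- r x)). apply Rmult_le_pos. pose proof (exp_pos (-mu*x)); lra.
    assert (r x <= 0) by (apply Hr1; lra). lra. lra. }
  destruct Hb as [Hb|Hb].
  - assert (Hg1 : g 1 = - exp (-mu) * g 0).
    { unfold g. rewrite Hb. replace (-mu * 0) with 0 by ring. rewrite exp_0. replace (-mu*1) with (-mu) by ring. ring. }
    pose proof (exp_pos (-mu)) as He.
    destruct (Rle_lt_dec 0 (g 0)) as [G0|G0].
    + assert (g 1 <= 0) by (rewrite Hg1; assert (0 <= exp (-mu) * g 0) by (apply Rmult_le_pos; lra); lra).
      destruct (crossing (fun x => - g x) (fun x => - g' x) 0 c) as [d [Hd1 [Hd2 Hd3]]].
      intros x; apply (is_derive_opp g x (g' x)); auto. lra.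
      intros x y Hx Hxy Hy; specialize (Hdn x y Hx Hxy Hy); lra.
      exists d. split; [lra|right]. split.
      * intros x Hx. specialize (Hd2 x Hx). simpl in Hd2. destruct (Hsg x). lra.
      * intros x Hx. destruct (Rlt_le_dec x c).
        -- specialize (Hd3 x (conj (proj1 Hx) r0)). destruct (Hsg x). lra.
        -- specialize (Hup x 1). destruct (Hsg x). lra.
    + destruct (crossing g g' c 1) as [d [Hd1 [Hd2 Hd3]]]; auto. lra.
      exists d. split; [lra|left]. split.
      * intros x Hx. destruct (Rlt_le_dec x c).
        -- specialize (Hdn 0 x). destruct (Hsg x). lra.
        -- specialize (Hd2 x (conj r0 (proj2 Hx))). destruct (Hsg x). lra.
      * intros x Hx. specialize (Hd3 x Hx). destruct (Hsg x). lra.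
  - subst c. destruct (crossing g g' 0 1) as [d [Hd1 [Hd2 Hd3]]]; auto. lra.
    exists d. split; [lra|left]. split.
    * intros x Hx. specialize (Hd2 x Hx). destruct (Hsg x). lra.
    * intros x Hx. specialize (Hd3 x Hx). destruct (Hsg x). lra.
Qed.

Lemma Rolle2 (q r : R -> R) mu :
  (forall x, is_derive q x (mu * q x + r x)) ->
  (exists c, 0 <= c <= 1 /\ (Sg r c \/ Sg (fun x => - r x) c) /\ (q 1 = - q 0 \/ c = 0)) ->
  Psg q.
Proof.
  intros Hd [c [Hc [[Hs|Hs] Hb]]].
  - eapply Rolle_core; eauto.
  - destruct (Rolle_core (fun x => - q x) (fun x => - r x) mu c) as [d [Hd1 [H|H]]]; auto.
    + intros x. eapply is_derive_eq. apply (is_derive_opp q x). apply Hd. Rring.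
    + destruct Hb; [left; lra|right; auto].
    + exists d. split; auto.
    + exists d. split; auto. left. destruct H as [H1 H2]. split; intros x Hx.
      specialize (H1 x Hx); lra. specialize (H2 x Hx); lra.
Qed.

Lemma Sg_ext (f g : R -> R) c : (forall x, 0 <= x < 1 -> f x = g x) -> 0 <= c <= 1 -> Sg f c -> Sg g c.
Proof.
  intros He Hc [H1 H2]. split; intros x Hx; rewrite <- He by lra; auto.
Qed.

Lemma Sg_scal (f : R -> R) c k : 0 < k -> Sg f c -> Sg (fun x => k * f x) c.
Proof.
  intros Hk [H1 H2]. split; intros x Hx.
  - specialize (H1 x Hx). assert (0 <= k * (- f x)) by (apply Rmult_le_pos; lra). lra.
  - apply Rmult_le_pos; [lra|auto].
Qed.

Lemma Psg_scal (f : R -> R) k : 0 < k -> Psg f -> Psg (fun x => k * f x).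
Proof.
  intros Hk [c [Hc [H|H]]]; exists c; split; auto.
  - left; apply Sg_scal; auto.
  - right. apply (Sg_ext (fun x => k * (- f x))). intros; ring. auto. apply Sg_scal; auto.
Qed.

Lemma CS_exp c a : CS (fun x => c * exp (a * x)).
Proof.
  destruct (Rle_lt_dec 0 c).
  - left. split; intros x Hx; [lra|]. apply Rmult_le_pos; auto. pose proof (exp_pos (a*x)); lra.
  - right. split; intros x Hx; [lra|]. pose proof (exp_pos (a*x)).
    assert (0 <= (- c) * exp (a*x)) by (apply Rmult_le_pos; lra). lra.
Qed.

Lemma CS_Psg f : CS f -> Psg f.
Proof. intros [H|H]; exists 0; split; auto; lra. Qed.

Lemma ode1 (q : R -> R) mu : (forall x, is_derive q x (mu * q x)) -> forall x, q x = q 0 * exp (mu * x).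
Proof.
  intros Hd.
  set (h := fun x => exp (- mu * x) * q x).
  assert (Hh : forall x, is_derive h x 0).
  { intros x. unfold h. eapply is_derive_eq.
    apply (is_derive_mult (fun x => exp (-mu * x)) q x (- mu * exp (-mu*x)) (mu * q x)).
    auto_derive; auto; ring. apply Hd. intros; apply Rmult_comm. Rring. }
  assert (Hc : forall x, h x = h 0).
  { intros x. destruct (Rtotal_order x 0) as [Hx|[Hx|Hx]].
    - destruct (MVT_cor2 h (fun _ => 0) x 0) as [z [Hz _]]; [lra| |lra].
      intros; apply is_derive_Reals; auto.
    - subst; reflexivity.
    - destruct (MVT_cor2 h (fun _ => 0) 0 x) as [z [Hz _]]; [lra| |lra].
      intros; apply is_derive_Reals; auto. }
  intros x. specialize (Hc x). unfold h in Hc.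
  replace (-mu * 0) with 0 in Hc by ring. rewrite exp_0 in Hc.
  assert (exp (mu*x) * exp (-mu*x) = 1).
  { rewrite <- exp_plus. replace (mu*x + -mu*x) with 0 by ring. apply exp_0. }
  transitivity (exp (mu*x) * exp (-mu*x) * q x). rewrite H; ring.
  rewrite Rmult_assoc, Hc. ring.
Qed.

Lemma mono_final (F q r : R -> R) c :
  (forall x, F (x + 1) = - F x) -> (forall x, 0 <= x < 1 -> F x = q x) ->
  (forall x, is_derive q x (r x)) -> 0 <= c <= 1 -> Sg r c -> (q 1 = - q 0 \/ c = 0) ->
  forall x y, c <= x -> x <= y -> y < c + 1 -> F x <= F y.
Proof.
  intros Hap HF Hd Hc [Hr1 Hr2] Hb.
  assert (Hup : forall x y, c <= x -> x <= y -> y <= 1 -> q x <= q y).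
  { apply (mono_up q r c 1 Hd). intros; apply Hr2; lra. }
  assert (Hdn : forall x y, 0 <= x -> x <= y -> y <= c -> q y <= q x).
  { apply (mono_down q r 0 c Hd). intros; apply Hr1; lra. }
  assert (HF2 : forall y, 1 <= y < 2 -> F y = - q (y - 1)).
  { intros y Hy. replace y with ((y-1)+1) by ring. rewrite Hap. rewrite HF by lra.
    replace (y - 1 + 1 - 1) with (y-1) by ring. reflexivity. }
  intros x y Hx Hxy Hy.
  destruct (Rlt_le_dec y 1).
  - rewrite !HF by lra. apply Hup; lra.
  - destruct (Rlt_le_dec x 1).
    + destruct Hb as [Hb|Hb]; [|lra].
      rewrite HF by lra. rewrite HF2 by lra.
      specialize (Hup x 1). specialize (Hdn 0 (y-1)). lra.
    + rewrite !HF2 by lra. specialize (Hdn (x-1) (y-1)). lra.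
Qed.

Lemma mono_ex (F q r : R -> R) :
  (forall x, F (x + 1) = - F x) -> (forall x, 0 <= x < 1 -> F x = q x) ->
  (forall x, is_derive q x (r x)) ->
  (exists c, 0 <= c <= 1 /\ (Sg r c \/ Sg (fun x => - r x) c) /\ (q 1 = - q 0 \/ c = 0)) ->
  exists x0, monotone_on F x0 (x0 + 1).
Proof.
  intros Hap HF Hd [c [Hc [[Hs|Hs] Hb]]]; exists c.
  - left. intros x y Hx Hxy Hy. eapply mono_final; eauto.
  - right. intros x y Hx Hxy Hy.
    assert (- F x <= - F y); [|lra].
    apply (mono_final (fun x => - F x) (fun x => - q x) (fun x => - r x) c); auto.
    intros; rewrite Hap; ring. intros; rewrite HF; auto.
    intros z. apply (is_derive_opp q z). auto.
    destruct Hb; [left; lra|right; auto].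
Qed.

Lemma antiper_shift (F : R -> R) : (forall x, F (x + 1) = - F x) ->
  forall k : Z, (forall y, F (y + IZR k) = F y) \/ (forall y, F (y + IZR k) = - F y).
Proof.
  intros Hap k. induction k using Z.peano_ind.
  - left. intros y. rewrite Rplus_0_r. reflexivity.
  - rewrite succ_IZR. destruct IHk as [H|H]; [right|left]; intros y;
      replace (y + (IZR k + 1)) with ((y + IZR k) + 1) by ring; rewrite Hap, H; ring.
  - rewrite <- Z.sub_1_r, minus_IZR. destruct IHk as [H|H]; [right|left]; intros y;
      specialize (Hap (y + (IZR k - 1))); replace (y + (IZR k - 1) + 1) with (y + IZR k) in Hap by ring;
      rewrite H in Hap; lra.
Qed.

Lemma mono_all (F : R -> R) x0 : (forall x, F (x + 1) = - F x) -> monotone_on F x0 (x0 + 1) ->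
  forall k : Z, monotone_on F (x0 + IZR k) (x0 + IZR k + 1).
Proof.
  intros Hap Hm k. destruct (antiper_shift F Hap k) as [H|H].
  - destruct Hm as [Hm|Hm]; [left|right]; intros x y Hx Hxy Hy.
    + replace x with ((x - IZR k) + IZR k) by ring. replace y with ((y - IZR k) + IZR k) by ring.
      rewrite !H. apply Hm; lra.
    + replace x with ((x - IZR k) + IZR k) by ring. replace y with ((y - IZR k) + IZR k) by ring.
      rewrite !H. apply Hm; lra.
  - destruct Hm as [Hm|Hm]; [right|left]; intros x y Hx Hxy Hy.
    + replace x with ((x - IZR k) + IZR k) by ring. replace y with ((y - IZR k) + IZR k) by ring.
      rewrite !H. assert (F (x - IZR k) <= F (y - IZR k)) by (apply Hm; lra). lra.
    + replace x with ((x - IZR k) + IZR k) by ring. replace y with ((y - IZR k) + IZR k) by ring.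
      rewrite !H. assert (F (y - IZR k) <= F (x - IZR k)) by (apply Hm; lra). lra.
Qed.

Lemma Psg_ext (f g : R -> R) : (forall x, 0 <= x < 1 -> f x = g x) -> Psg f -> Psg g.
Proof.
  intros He [c [Hc [H|H]]]; exists c; split; auto; [left|right]; eapply Sg_ext; eauto.
  intros; simpl; rewrite He; auto.
Qed.

Lemma CS_ext (f g : R -> R) : (forall x, 0 <= x < 1 -> f x = g x) -> CS f -> CS g.
Proof.
  intros He [H|H]; [left|right]; eapply Sg_ext; eauto; try lra.
  intros; simpl; rewrite He; auto.
Qed.

Lemma CS_scal (f : R -> R) k : 0 < k -> CS f -> CS (fun x => k * f x).
Proof.
  intros Hk [H|H]; [left|right]. apply Sg_scal; auto.
  apply (Sg_ext (fun x => k * (- f x))). intros; ring. lra. apply Sg_scal; auto.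
Qed.

Lemma ex_of_CS (r q : R -> R) : CS r ->
  exists c, 0 <= c <= 1 /\ (Sg r c \/ Sg (fun x => - r x) c) /\ (q 1 = - q 0 \/ c = 0).
Proof. intros H. exists 0. split; [lra|split; auto]. Qed.

Lemma ex_of_Psg (r q : R -> R) : Psg r -> q 1 = - q 0 ->
  exists c, 0 <= c <= 1 /\ (Sg r c \/ Sg (fun x => - r x) c) /\ (q 1 = - q 0 \/ c = 0).
Proof. intros [c [Hc H]] Hq. exists c. auto. Qed.

Lemma ek mu : 0 < 1 + exp mu.
Proof. pose proof (exp_pos mu); lra. Qed.

Lemma A_chain : forall L, L <> nil -> Psg (dp L 1).
Proof.
  induction L as [|mu L IH]; intros HL; [congruence|].
  destruct L as [|a L].
  - apply CS_Psg. apply (CS_ext (fun x => mu * exp (mu * x))).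
    intros; rewrite dp_base; ring. apply CS_exp.
  - apply (Rolle2 (dp (mu :: a :: L) 1) (fun x => (1 + exp mu) * dp (a :: L) 1 x) mu).
    + intros x. rewrite <- dp_rec by congruence. apply dp_deriv.
    + destruct L as [|b L].
      * apply ex_of_CS. apply CS_scal. apply ek.
        apply (CS_ext (fun x => a * exp (a * x))). intros; rewrite dp_base; ring. apply CS_exp.
      * apply ex_of_Psg. apply Psg_scal. apply ek. apply IH; congruence.
        apply dp_bdry. simpl; lia.
Qed.

Lemma CS2 : forall L eta, L <> nil -> (length L <= 2)%nat -> In eta L ->
  CS (fun x => dp L 2 x - eta * dp L 1 x).
Proof.
  intros L eta HL Hlen Hin.
  destruct L as [|mu [|lam [|c L]]]; [congruence| | |simpl in Hlen; lia].
  - destruct Hin as [<-|[]].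
    apply (CS_ext (fun x => 0 * exp (mu * x))). intros; rewrite !dp_base; ring. apply CS_exp.
  - destruct Hin as [<-|[<-|[]]].
    + apply (CS_ext (fun x => ((1 + exp mu) * lam) * exp (lam * x))).
      intros x _. rewrite dp_rec by congruence. rewrite dp_base. ring. apply CS_exp.
    + set (q := fun x => dp (mu :: lam :: nil) 1 x - lam * dp (mu :: lam :: nil) 0 x).
      assert (Hq : forall x, is_derive q x (mu * q x)).
      { intros x. unfold q. eapply is_derive_eq.
        apply (is_derive_minus (dp (mu :: lam :: nil) 1) (fun x => lam * dp (mu :: lam :: nil) 0 x)).
        apply dp_deriv. apply is_derive_scal. apply dp_deriv.
        cbn - [dp]. rewrite !dp_rec by congruence. rewrite !dp_base. ring. }
      pose proof (ode1 q mu Hq) as Hs.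
      apply (CS_ext (fun x => (mu * q 0) * exp (mu * x))).
      intros x _. rewrite Rmult_assoc, <- Hs. unfold q.
      rewrite !dp_rec by congruence. rewrite !dp_base. ring.
      apply CS_exp.
Qed.

Lemma B_chain : forall L eta, L <> nil -> In eta L -> Psg (fun x => dp L 2 x - eta * dp L 1 x).
Proof.
  induction L as [|mu L IH]; intros eta HL Hin; [congruence|].
  destruct L as [|a L].
  - apply CS_Psg, CS2; auto.
  - destruct Hin as [<-|Hin].
    + apply (Psg_ext (fun x => (1 + exp mu) * dp (a :: L) 1 x)).
      intros x _. rewrite (dp_rec mu (a :: L)) by congruence. ring.
      apply Psg_scal. apply ek. apply A_chain; congruence.
    + apply (Rolle2 _ (fun x => (1 + exp mu) * (dp (a :: L) 2 x - eta * dp (a :: L) 1 x)) mu).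
      * intros x. eapply is_derive_eq.
        apply (is_derive_minus (dp (mu :: a :: L) 2) (fun x => eta * dp (mu :: a :: L) 1 x)).
        apply dp_deriv. apply is_derive_scal. apply dp_deriv.
        cbn - [dp]. rewrite !(dp_rec mu (a :: L)) by congruence. ring.
      * destruct (le_lt_dec (length (a :: L)) 2).
        -- apply (ex_of_CS _ (fun x => dp (mu::a::L) 2 x - eta * dp (mu::a::L) 1 x)). apply CS_scal. apply ek. apply CS2; auto. congruence.
        -- apply (ex_of_Psg _ (fun x => dp (mu::a::L) 2 x - eta * dp (mu::a::L) 1 x)). apply Psg_scal. apply ek. apply IH; auto. congruence.
           rewrite !dp_bdry by (simpl in *; lia). ring.
Qed.

Lemma db_ex L n j y : ex_derive (db L n j) y.
Proof. eexists; apply db_deriv. Qed.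

Lemma sub_lemma (mu : R) (h : R -> R) (a b y : R) :
  (forall z, ex_derive h z) ->
  RInt (fun t => exp (mu*t) * h (y - t)) a b = exp (mu*y) * RInt (fun s => exp (-mu*s) * h s) (y-b) (y-a).
Proof.
  intros Hh.
  set (G := fun s => exp (-mu*s) * h s).
  assert (HG : forall z, continuous G z).
  { intros z. apply (ex_derive_continuous G). unfold G. auto_derive. apply Hh. }
  assert (HGe : forall a b, ex_RInt G a b).
  { intros. apply (@ex_RInt_continuous R_CompleteNormedModule); auto. }
  assert (HG2 : forall a b, ex_RInt (fun t => G (-1 * t + y)) a b).
  { intros. apply (@ex_RInt_continuous R_CompleteNormedModule). intros z _.
    apply (ex_derive_continuous (fun t => G (-1*t+y))). unfold G. auto_derive. apply Hh. }
  rewrite (RInt_ext _ (fun t => scal (exp (mu*y)) (G (-1 * t + y)))).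
  rewrite (@RInt_scal R_CompleteNormedModule) by auto. unfold scal; simpl; unfold mult; simpl. f_equal.
  rewrite <- (opp_RInt_swap G) by auto.
  replace (y - a) with (-1 * a + y) by ring. replace (y - b) with (-1 * b + y) by ring.
  rewrite <- RInt_comp_lin by auto.
  rewrite (@RInt_scal R_CompleteNormedModule) by auto. unfold scal, opp; simpl; unfold mult; simpl. Rring.
  intros t _. unfold G, scal; simpl; unfold mult; simpl.
  replace (-1 * t + y) with (y - t) by ring.
  rewrite <- Rmult_assoc, <- exp_plus. f_equal. f_equal. ring.
Qed.

Lemma exr_comb mu (h : R -> R) y a b : (forall z, ex_derive h z) ->
  ex_RInt (fun t => exp (mu*t) * h (y - t)) a b.
Proof.
  intros Hh. apply (@ex_RInt_continuous R_CompleteNormedModule). intros z _.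
  apply (ex_derive_continuous (fun t => exp (mu*t) * h (y - t))). auto_derive. apply Hh.
Qed.

Lemma G1 : forall L, L <> nil -> forall j y, IZR j <= y < IZR j + 1 -> EB L y = db L 0 j y.
Proof.
  induction L as [|mu L IH]; intros HL j y Hy; [congruence|].
  destruct L as [|a L].
  - simpl. unfold expchi, chi01.
    destruct (Z.eq_dec j 0) as [->|Hj].
    + simpl in Hy. destruct (Rle_dec 0 y); [|lra]. destruct (Rlt_dec y 1); [|lra]. ring.
    + destruct (Z_lt_le_dec j 0) as [Hn|Hp].
      * assert (IZR j <= -1) by (apply IZR_le; lia).
        destruct (Rle_dec 0 y); [lra|]. ring.
      * assert (1 <= IZR j) by (apply IZR_le; lia).
        destruct (Rle_dec 0 y); [|ring]. destruct (Rlt_dec y 1); [lra|ring].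
  - set (L' := a :: L) in *.
    assert (IH' : forall j y, IZR j <= y < IZR j + 1 -> EB L' y = db L' 0 j y) by (apply IH; unfold L'; congruence).
    change (EB (mu :: L') y) with (RInt (fun t => expchi mu t * EB L' (y - t)) 0 1).
    change (db (mu :: L') 0 j y) with (bstep mu (db L' 0) j y).
    set (t0 := y - IZR j).
    set (f := fun t => expchi mu t * EB L' (y - t)).
    set (f1 := fun t => exp (mu*t) * db L' 0 j (y - t)).
    set (f2 := fun t => exp (mu*t) * db L' 0 (j-1)%Z (y - t)).
    assert (Hc1 : forall a b, ex_RInt f1 a b) by (intros; apply exr_comb; intros; apply db_ex).
    assert (Hc2 : forall a b, ex_RInt f2 a b) by (intros; apply exr_comb; intros; apply db_ex).
    assert (E1 : forall t, Rmin 0 t0 < t < Rmax 0 t0 -> f1 t = f t).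
    { intros t Ht. rewrite Rmin_left, Rmax_right in Ht by (unfold t0; lra).
      unfold f, f1, expchi, chi01. destruct (Rle_dec 0 t); [|lra]. destruct (Rlt_dec t 1); [|unfold t0 in *; lra].
      rewrite (IH' j (y - t)) by (unfold t0 in *; lra). ring. }
    assert (E2 : forall t, Rmin t0 1 < t < Rmax t0 1 -> f2 t = f t).
    { intros t Ht. rewrite Rmin_left, Rmax_right in Ht by (unfold t0; lra).
      unfold f, f2, expchi, chi01. destruct (Rle_dec 0 t); [|unfold t0 in *; lra]. destruct (Rlt_dec t 1); [|lra].
      rewrite (IH' (j-1)%Z (y - t)). ring. rewrite minus_IZR. unfold t0 in *; lra. }
    rewrite <- (RInt_Chasles f 0 t0 1).
    2: { apply (ex_RInt_ext f1); auto. }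
    2: { apply (ex_RInt_ext f2); auto. }
    rewrite <- (RInt_ext f1 f 0 t0 E1), <- (RInt_ext f2 f t0 1 E2).
    unfold f1, f2. clearbody L'. rewrite !sub_lemma by (intros; apply db_ex).
    unfold bstep, plus. cbn - [RInt exp].
    replace (y - t0) with (IZR j) by (unfold t0; ring). replace (y - 0) with y by ring.
    ring.
Qed.

Lemma floor_ex y : exists j, IZR j <= y < IZR j + 1.
Proof.
  destruct (archimed y) as [H1 H2]. exists (up y - 1)%Z. rewrite minus_IZR. lra.
Qed.

Lemma nat_above r : exists N : nat, r < INR N.
Proof.
  destruct (archimed r) as [H1 H2].
  destruct (Z_lt_le_dec (up r) 0) as [Hn|Hp].
  - exists O. simpl. assert (IZR (up r) <= 0) by (apply IZR_le; lia). lra.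
  - exists (Z.to_nat (up r)). rewrite INR_IZR_INZ. rewrite Z2Nat.id by lia. lra.
Qed.

Lemma EB_supp L y : L <> nil -> (y < 0 \/ INR (length L) <= y) -> EB L y = 0.
Proof.
  intros HL Hy. destruct (floor_ex y) as [j Hj].
  rewrite (G1 L HL j y Hj). apply db_supp.
  destruct Hy as [Hy|Hy].
  - left. apply lt_IZR. lra.
  - right. rewrite INR_IZR_INZ in Hy. assert (IZR (Z.of_nat (length L)) < IZR j + 1) by lra.
    rewrite <- plus_IZR in H. apply lt_IZR in H. lia.
Qed.

Lemma series_fin (a : nat -> R) N : (forall n, (N < n)%nat -> a n = 0) -> is_series a (sum_f_R0 a N).
Proof.
  intros H. apply is_series_Reals. intros eps He. exists N. intros n Hn.
  assert (sum_f_R0 a n = sum_f_R0 a N).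
  { induction Hn; auto. simpl. rewrite IHHn, H by lia. ring. }
  rewrite H0. unfold R_dist. rewrite Rminus_diag, Rabs_R0. lra.
Qed.

Lemma ex_series_fin (a : nat -> R) N : (forall n, (N < n)%nat -> a n = 0) -> ex_series a.
Proof. intros H. eexists. apply (series_fin a N H). Qed.

Lemma zak_antiper (f : R -> R) M : (forall y, (y < 0 \/ M <= y) -> f y = 0) ->
  forall x, ZakHalf f (x + 1) = - ZakHalf f x.
Proof.
  intros Hf x. unfold ZakHalf.
  assert (Ex1 : forall x, ex_series (fun k : nat => (-1) ^ k * f (x + INR k))).
  { intros z. destruct (nat_above (M - z)) as [N HN]. apply (ex_series_fin _ N).
    intros n Hn. rewrite Hf. ring. right. apply lt_INR in Hn. lra. }
  assert (Ex2 : forall x, ex_series (fun j : nat => (-1) ^ (j + 1) * f (x - INR (j + 1)))).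
  { intros z. destruct (nat_above z) as [N HN]. apply (ex_series_fin _ N).
    intros n Hn. rewrite Hf. ring. left. apply lt_INR in Hn. rewrite plus_INR. simpl. lra. }
  rewrite (Series_incr_1 _ (Ex1 x)).
  rewrite (Series_incr_1 _ (Ex2 (x + 1))).
  rewrite (Series_ext (fun k => (-1) ^ S k * f (x + INR (S k)))
                      (fun k => -1 * ((-1) ^ k * f ((x + 1) + INR k)))).
  rewrite (Series_ext (fun k => (-1) ^ (S k + 1) * f (x + 1 - INR (S k + 1)))
                      (fun k => -1 * ((-1) ^ (k + 1) * f (x - INR (k + 1))))).
  rewrite !Series_scal_l. simpl. replace (x + 1 - 1) with x by ring. replace (x + 0) with x by ring. ring.
  intros k. rewrite !plus_INR, S_INR. change (INR 1) with 1. rewrite Nat.add_succ_l.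
  change ((-1) ^ S (k + 1)) with (-1 * (-1) ^ (k + 1)).
  replace (x + 1 - (INR k + 1 + 1)) with (x - (INR k + 1)) by ring. ring.
  intros k. rewrite S_INR. change ((-1) ^ S k) with (-1 * (-1) ^ k).
  replace (x + (INR k + 1)) with (x + 1 + INR k) by ring. ring.
Qed.

Lemma zak_base L x : L <> nil -> 0 <= x < 1 -> ZakHalf (EB L) x = dp L 0 x.
Proof.
  intros HL Hx. unfold ZakHalf.
  assert (H1 : forall n, (length L < n)%nat -> (fun k : nat => (-1) ^ k * EB L (x + INR k)) n = 0).
  { intros n Hn. simpl. rewrite EB_supp; auto. ring. right. apply lt_INR in Hn. lra. }
  assert (H2 : forall n, (0 < n)%nat -> (fun j : nat => (-1) ^ (j + 1) * EB L (x - INR (j + 1))) n = 0).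
  { intros n _. simpl. rewrite EB_supp; auto. ring. left. rewrite plus_INR. simpl. pose proof (pos_INR n). lra. }
  rewrite (is_series_unique _ _ (series_fin _ _ H1)).
  rewrite (is_series_unique _ _ (series_fin _ _ H2)).
  simpl. rewrite (EB_supp L). unfold dp. rewrite Rmult_0_r, Rplus_0_r.
  apply sum_eq. intros i _. rewrite (G1 L HL (Z.of_nat i)). reflexivity.
  rewrite <- INR_IZR_INZ. lra. auto. left. lra.
Qed.

Lemma Derive_right (f h : R -> R) x eps l : 0 < eps ->
  (forall y, x <= y < x + eps -> f y = h y) -> is_derive h x l -> Derive f x = l.
Proof.
  intros He Hfh Hd. rewrite <- (is_derive_unique h x l Hd).
  unfold Derive, Lim. f_equal. apply Lim_seq_ext_loc.
  destruct (nat_above (/ eps)) as [N HN]. exists N. intros n Hn.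
  simpl. apply le_INR in Hn.
  assert (Hp : 0 < INR n + 1) by (pose proof (pos_INR n); lra).
  assert (Hs : / (INR n + 1) < eps).
  { assert (Hl : / eps < INR n + 1) by lra.
    assert (0 < / eps) by (apply Rinv_0_lt_compat; lra).
    apply Rinv_lt_contravar in Hl. rewrite Rinv_inv in Hl. exact Hl.
    apply Rmult_lt_0_compat; lra. }
  assert (0 < / (INR n + 1)) by (apply Rinv_0_lt_compat; lra).
  rewrite !Hfh; auto; lra.
Qed.

Lemma Derive_shift1 (f : R -> R) x : Derive f (x + 1) = Derive (fun y => f (y + 1)) x.
Proof.
  unfold Derive. f_equal. apply Lim_ext. intros h. replace (x + h + 1) with (x + 1 + h) by ring. reflexivity.
Qed.

Lemma dop_antiper eta (F : R -> R) : (forall x, F (x + 1) = - F x) ->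
  forall x, Dop eta F (x + 1) = - Dop eta F x.
Proof.
  intros Hap x. unfold Dop. rewrite Derive_shift1.
  rewrite (Derive_ext _ (fun y => (- exp (- eta)) * (exp (- eta * y) * F y))).
  rewrite Derive_scal.
  assert (exp (eta * (x + 1)) * exp (- eta) = exp (eta * x)).
  { rewrite <- exp_plus. f_equal. ring. }
  transitivity (- (exp (eta * (x + 1)) * exp (- eta)) * Derive (fun y => exp (- eta * y) * F y) x). ring.
  rewrite H. ring.
  intros t. rewrite Hap. replace (- eta * (t + 1)) with (- eta * t + - eta) by ring. rewrite exp_plus. ring.
Qed.

Lemma dop_base L eta x : L <> nil -> 0 <= x < 1 ->
  Dop eta (ZakHalf (EB L)) x = dp L 1 x - eta * dp L 0 x.
Proof.
  intros HL Hx. unfold Dop.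
  rewrite (Derive_right _ (fun y => exp (- eta * y) * dp L 0 y) x (1 - x)
     (- eta * exp (- eta * x) * dp L 0 x + exp (- eta * x) * dp L 1 x)).
  - assert (exp (eta * x) * exp (- eta * x) = 1).
    { rewrite <- exp_plus. replace (eta * x + - eta * x) with 0 by ring. apply exp_0. }
    transitivity ((exp (eta * x) * exp (- eta * x)) * (dp L 1 x - eta * dp L 0 x)). ring.
    rewrite H. ring.
  - lra.
  - intros y Hy. rewrite zak_base; auto. lra.
  - eapply is_derive_eq.
    apply (is_derive_mult (fun y => exp (- eta * y)) (dp L 0) x (- eta * exp (- eta * x)) (dp L 1 x)).
    auto_derive; auto; ring. apply dp_deriv. intros; apply Rmult_comm. Rring.
Qed.

Theorem mainTheorem7 (L : list R) (HL : L <> nil) :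
  (exists x0 : R, forall k : Z,
      monotone_on (ZakHalf (EB L)) (x0 + IZR k) (x0 + IZR k + 1)) /\
  (forall eta : R, In eta L ->
     exists y0 : R, forall k : Z,
       monotone_on (Dop eta (ZakHalf (EB L))) (y0 + IZR k) (y0 + IZR k + 1)).
Proof.
  assert (Hap : forall x, ZakHalf (EB L) (x + 1) = - ZakHalf (EB L) x).
  { apply (zak_antiper (EB L) (INR (length L))). intros; apply EB_supp; auto. }
  split.
  - destruct (mono_ex (ZakHalf (EB L)) (dp L 0) (dp L 1)) as [x0 Hx0]; auto.
    + intros; apply zak_base; auto.
    + intros; apply dp_deriv.
    + destruct L as [|mu [|a L']]; [congruence| |].
      * apply ex_of_CS. apply (CS_ext (fun x => mu * exp (mu * x))).
        intros; rewrite dp_base; ring. apply CS_exp.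
      * apply ex_of_Psg. apply A_chain; auto. apply dp_bdry. simpl; lia.
    + exists x0. apply mono_all; auto.
  - intros eta Hin.
    destruct (mono_ex (Dop eta (ZakHalf (EB L))) (fun x => dp L 1 x - eta * dp L 0 x)
                      (fun x => dp L 2 x - eta * dp L 1 x)) as [y0 Hy0].
    + apply dop_antiper; auto.
    + intros; apply dop_base; auto.
    + intros x. apply (is_derive_minus (dp L 1) (fun x => eta * dp L 0 x)).
      apply dp_deriv. apply is_derive_scal, dp_deriv.
    + destruct (le_lt_dec (length L) 2).
      * apply (ex_of_CS _ (fun x => dp L 1 x - eta * dp L 0 x)). apply CS2; auto.
      * apply (ex_of_Psg _ (fun x => dp L 1 x - eta * dp L 0 x)). apply B_chain; auto. rewrite !dp_bdry by lia. ring.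
    + exists y0. apply mono_all; auto. apply dop_antiper; auto.
Qed.
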